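(* Let $C>0$. Consider four sites $s\in\{1,2,3,4\}$ with scalar covariates $X_s=s$. The experimental sites are $\mathcal{S}_E=\{1,4\}$, the policy sites are $\mathcal{S}_P=\{2,3\}$, and at most $k=1$ site may be sampled, so the feasible sampling sets are $\mathcal{A}(1)=\{\emptyset,\{1\},\{4\}\}$. Let $\Theta$ be the set of vectors $(\tau_1,\tau_2,\tau_3,\tau_4)\in\mathbb{R}^4$ with $|\tau_s-\tau_t|\le C|s-t|$ for all $s,t$; equivalently, $\tau_s=\tau(s)$ for some $C$-Lipschitz $\tau:\mathbb{R}\to\mathbb{R}$. Signals are noiseless: if $\mathscr{S}$ is sampled, the policy maker observes exactly $(\tau_s)_{s\in\mathscr{S}}$. A treatment rule for $\mathscr{S}$ is a measurable map $T^{\mathscr{S}}$ from the observations to actions $(a_2,a_3)\in[0,1]^2$. The regret of actions $(a_2,a_3)$ is $\frac12\sum_{s\in\{2,3\}}\tau_s(\mathbf{1}\{\tau_s\ge0\}-a_s)$. A randomized design consists of a probability distribution $p$ on $\mathcal{A}(1)$ together with a treatment rule $T^{\mathscr{S}}$ for each $\mathscr{S}\in\mathcal{A}(1)$. Its worst-case regret is the supremum over $\tau\in\Theta$ of the $p$-expected regret; here the parameter $\tau$ is fixed before the sampled set is drawn. A purposive design is a randomized design in which $p$ is a point mass. Then: (1) the infimum of worst-case regret over all randomized designs equals $C/2$, and it is attained; (2) the infimum of worst-case regret over all purposive designs equals $3C/4$, and it is attained.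
   Context: This is a stylized example comparing randomized and purposive (nonrandom) selection of experimental sites under minimax regret. The adversarial parameter is chosen before the randomization over sampling sets is realized, and it is the same for all realizations of the sampled set. *)

(* Defs.v *)
From HB Require Import structures.
From mathcomp Require Import all_boot all_order all_algebra.
From mathcomp Require Import all_classical all_reals all_analysis.
Set Implicit Arguments. Unset Strict Implicit. Unset Printing Implicit Defensive.
Import Order.TTheory GRing.Theory Num.Theory.
Local Open Scope classical_set_scope.
Local Open Scope ring_scope.

Section Defs.
Variable R : realType.

(* Sites s = 1,2,3,4 are represented by i : 'I_4 with s = i+1. *)
Definition site1 : 'I_4 := @Ordinal 4 0 isT.
Definition site2 : 'I_4 := @Ordinal 4 1 isT.
Definition site3 : 'I_4 := @Ordinal 4 2 isT.
Definition site4 : 'I_4 := @Ordinal 4 3 isT.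

Definition covX (i : 'I_4) : R := (i.+1)%:R.

Definition Theta (C : R) : set ('I_4 -> R) :=
  [set tau | forall i j : 'I_4, `|tau i - tau j| <= C * `|covX i - covX j| ].

Definition regret (tau : 'I_4 -> R) (a : R * R) : R :=
  2^-1 * (tau site2 * (((0 <= tau site2)%R)%:R - a.1)
        + tau site3 * (((0 <= tau site3)%R)%:R - a.2)).

(* A randomized design: probabilities of sampling sets {}, {1}, {4},
   an action for the empty set (no observations), and treatment rules
   mapping the (noiseless) observation tau_1 resp. tau_4 to actions. *)
Record design := Design {
  p_empty : R; p_one : R; p_four : R;
  rule_empty : R * R;
  rule_one : R -> R * R;
  rule_four : R -> R * R }.

Definition in01 (a : R * R) : Prop :=
  0 <= a.1 <= 1 /\ 0 <= a.2 <= 1.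

Definition valid_design (d : design) : Prop :=
  (0 <= p_empty d /\ 0 <= p_one d /\ 0 <= p_four d /\
   p_empty d + p_one d + p_four d = 1) /\
  (in01 (rule_empty d) /\ (forall x, in01 (rule_one d x)) /\
   (forall x, in01 (rule_four d x))) /\
  (measurable_fun setT (fun x => (rule_one d x).1) /\
   measurable_fun setT (fun x => (rule_one d x).2) /\
   measurable_fun setT (fun x => (rule_four d x).1) /\
   measurable_fun setT (fun x => (rule_four d x).2)).

Definition purposive (d : design) : Prop :=
  valid_design d /\ (p_empty d = 1 \/ p_one d = 1 \/ p_four d = 1).

Definition exp_regret (d : design) (tau : 'I_4 -> R) : R :=
  p_empty d * regret tau (rule_empty d)
  + p_one d * regret tau (rule_one d (tau site1))
  + p_four d * regret tau (rule_four d (tau site4)).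

Definition worst_regret (C : R) (d : design) : \bar R :=
  ereal_sup [set (exp_regret d tau)%:E | tau in Theta C].

End Defs.

(* Main.v *)
Require Import Defs.
From HB Require Import structures.
From mathcomp Require Import all_boot all_order all_algebra.
From mathcomp Require Import all_classical all_reals all_analysis.
From mathcomp Require Import ring lra.
Import Order.TTheory GRing.Theory Num.Theory.
Local Open Scope classical_set_scope.
Local Open Scope ring_scope.

Section S.
Variable R : realType.
Definition clip (D x : R) : R := Num.min 1 (Num.max 0 ((x + D) / (2 * D))).

Lemma clipP (D x : R) : 0 < D ->
  (x <= - D /\ clip D x = 0) \/ (D <= x /\ clip D x = 1) \/
  (- D < x < D /\ 2 * D * clip D x = x + D).
Proof.
move=> hD; rewrite /clip.
have h2 : 0 < 2 * D by lra.
case: (lerP x (-D)) => h1.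
  left; split => //.
  have : (x + D) / (2 * D) <= 0 by rewrite pmulr_lle0 ?invr_gt0 //; lra.
  move=> h; rewrite (max_idPl h). by rewrite (min_idPr ler01).
case: (lerP D x) => h3.
  right; left; split => //.
  have : 1 <= (x + D) / (2 * D) by rewrite ler_pdivlMr //; lra.
  move=> h; rewrite (max_idPr (le_trans ler01 h)). by rewrite (min_idPl h).
right; right; split; first by apply/andP.
have hge : 0 <= (x + D) / (2 * D) by rewrite divr_ge0 //; lra.
have hle : (x + D) / (2 * D) <= 1 by rewrite ler_pdivrMr //; lra.
rewrite (max_idPr hge) (min_idPr hle).
by rewrite mulrC divfK //; lra.
Qed.

Definition rho (t a : R) : R := t * (((0 <= t)%R)%:R - a).

Lemma scale2 (C X : R) : 0 < C -> 2 * C * X <= 2 * C * (2 * C) -> X <= 2 * C.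
Proof. by move=> hC; rewrite ler_pM2l //; lra. Qed.

Lemma core (C u t2 t3 v : R) : 0 < C ->
  `|t2 - u| <= C -> `|t3 - u| <= 2 * C -> `|v - u| <= 3 * C ->
  `|t3 - t2| <= C -> `|v - t2| <= 2 * C -> `|v - t3| <= C ->
  rho t2 (clip C u) + rho t2 (clip C v) + rho t3 (clip C u) + rho t3 (clip C v)
  <= 2 * C.
Proof.
move=> hC h1 h2 h3 h4 h5 h6.
move: h1 h2 h3 h4 h5 h6; rewrite !ler_norml => /andP[h1 h1'] /andP[h2 h2'] /andP[h3 h3'] /andP[h4 h4'] /andP[h5 h5'] /andP[h6 h6'].
rewrite /rho.
case: (clipP C u hC) => [[hu ->]|[[hu ->]|[/andP[hu hu'] hau]]];
case: (clipP C v hC) => [[hv ->]|[[hv ->]|[/andP[hv hv'] hav]]];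
case: (lerP 0 t2) => ht2; case: (lerP 0 t3) => ht3; rewrite ?mulr1n ?mulr0n; try nra.
all: apply: (@scale2 C _ hC).
- have e3 := congr1 (fun z => z * t2) hav; have e4 := congr1 (fun z => z * t3) hav.
  rewrite /= in e3 e4; nra.
- have e3 := congr1 (fun z => z * t2) hav; have e4 := congr1 (fun z => z * t3) hav.
  rewrite /= in e3 e4; nra.
- have e1 := congr1 (fun z => z * t2) hau; have e2 := congr1 (fun z => z * t3) hau.
  rewrite /= in e1 e2; nra.
- have e1 := congr1 (fun z => z * t2) hau; have e2 := congr1 (fun z => z * t3) hau.
  rewrite /= in e1 e2; nra.
- have e1 := congr1 (fun z => z * t2) hau; have e2 := congr1 (fun z => z * t3) hau.
  have e3 := congr1 (fun z => z * t2) hav; have e4 := congr1 (fun z => z * t3) hav.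
  rewrite /= in e1 e2 e3 e4.
  have k1 : 0 <= (u+v+2*C-t2-t3)*(2*C-u-v) by apply: mulr_ge0; lra.
  have k2 : 0 <= (u+v)^+2 by apply: sqr_ge0.
  nra.
- have e1 := congr1 (fun z => z * t2) hau; have e2 := congr1 (fun z => z * t3) hau.
  have e3 := congr1 (fun z => z * t2) hav; have e4 := congr1 (fun z => z * t3) hav.
  rewrite /= in e1 e2 e3 e4.
  have k1 : 0 <= (t2+t3-u-v+2*C)*(u+v+2*C) by apply: mulr_ge0; lra.
  have k2 : 0 <= (u+v)^+2 by apply: sqr_ge0.
  nra.
Qed.

Lemma clip01 (D x : R) : 0 < D -> 0 <= clip D x <= 1.
Proof.
move=> hD; case: (clipP D x hD) => [[_ ->]|[[_ ->]|[/andP[h1 h2] h]]]; apply/andP; split; try lra.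
- have : 0 <= 2 * D * clip D x by rewrite h; lra.
  by rewrite pmulr_rge0 //; lra.
- have : 2 * D * clip D x <= 2 * D * 1 by rewrite h; lra.
  by rewrite ler_pM2l //; lra.
Qed.

Lemma clip_meas (D : R) : 0 < D -> measurable_fun setT (clip D).
Proof.
move=> hD.
have -> : clip D = (cst 1) \min ((cst 0) \max (fun x => (x + D) * (2 * D)^-1)).
  by apply/funext => x.
apply: measurable_realfun.measurable_minr; first exact: measurable_cst.
apply: measurable_realfun.measurable_maxr; first exact: measurable_cst.
apply: measurable_realfun.measurable_funM; last exact: measurable_cst.
apply: measurable_realfun.measurable_funD; [exact: measurable_id | exact: measurable_cst].
Qed.

Lemma site_bound (D t x : R) : 0 < D -> `|t - x| <= D -> rho t (clip D x) <= D / 2.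
Proof.
move=> hD; rewrite ler_norml => /andP[h1 h2]; rewrite /rho.
case: (clipP D x hD) => [[hu ->]|[[hu ->]|[/andP[hu hu'] hau]]];
case: (lerP 0 t) => ht; rewrite ?mulr1n ?mulr0n; try nra.
- have e := congr1 (fun z => z * t) hau; rewrite /= in e.
  rewrite -(ler_pM2l (_ : 0 < 2 * D)); last lra.
  have k : 0 <= (x + D - t) * (D - x) by apply: mulr_ge0; lra.
  nra.
- have e := congr1 (fun z => z * t) hau; rewrite /= in e.
  rewrite -(ler_pM2l (_ : 0 < 2 * D)); last lra.
  have k : 0 <= (t - x + D) * (x + D) by apply: mulr_ge0; lra.
  nra.
Qed.

Definition tau4 (a b c e : R) : 'I_4 -> R := fun i => nth 0 [:: a; b; c; e] i.

Lemma absnat (k l : nat) : `|(k%:R : R) - l%:R| = if (l <= k)%N then (k - l)%:R else (l - k)%:R.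
Proof.
case: leqP => h.
  by rewrite -natrB // ger0_norm // ler0n.
rewrite -opprB -natrB ?normrN ?ger0_norm ?ler0n //; exact: ltnW.
Qed.

Lemma thetaP (C a b c e : R) : 0 <= C ->
  `|a - b| <= C -> `|a - c| <= 2 * C -> `|a - e| <= 3 * C ->
  `|b - c| <= C -> `|b - e| <= 2 * C -> `|c - e| <= C ->
  Theta C (tau4 a b c e).
Proof.
move=> hC h1 h2 h3 h4 h5 h6.
have h1' : `|b - a| <= C by rewrite distrC.
have h2' : `|c - a| <= 2 * C by rewrite distrC.
have h3' : `|e - a| <= 3 * C by rewrite distrC.
have h4' : `|c - b| <= C by rewrite distrC.
have h5' : `|e - b| <= 2 * C by rewrite distrC.
have h6' : `|e - c| <= C by rewrite distrC.
move=> [[|[|[|[|i]]]] hi] [[|[|[|[|j]]]] hj] //=;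
rewrite /tau4 /covX /= absnat /= /subn /= ?subrr ?normr0; try lra.
Qed.

Definition rpos (tau : 'I_4 -> R) := tau.

Lemma rpair (a : R * R) (tp tm : 'I_4 -> R) (y2 y3 : R) : 0 < y2 -> 0 < y3 ->
  tp site2 = y2 -> tp site3 = y3 -> tm site2 = - y2 -> tm site3 = - y3 ->
  regret tp a + regret tm a = (y2 + y3) / 2.
Proof.
move=> h2 h3 e1 e2 e3 e4; rewrite /regret e1 e2 e3 e4.
rewrite (ltW h2) (ltW h3) !oppr_ge0 !leNgt h2 h3 /= ?mulr1n ?mulr0n.
ring.
Qed.

Lemma exp_pair (d : design R) (tp tm : 'I_4 -> R) (y2 y3 : R) : valid_design d ->
  0 < y2 -> 0 < y3 ->
  tp site2 = y2 -> tp site3 = y3 -> tm site2 = - y2 -> tm site3 = - y3 ->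
  (p_one d = 0 \/ tp site1 = tm site1) -> (p_four d = 0 \/ tp site4 = tm site4) ->
  exp_regret d tp + exp_regret d tm = (y2 + y3) / 2.
Proof.
move=> [[hpe [hp1 [hp4 hs]]] _] h2 h3 e1 e2 e3 e4 o1 o4.
have E : forall a, regret tp a + regret tm a = (y2 + y3) / 2.
  by move=> a; exact: (@rpair a tp tm y2 y3 h2 h3 e1 e2 e3 e4).
have T1 : p_one d * regret tp (rule_one d (tp site1)) + p_one d * regret tm (rule_one d (tm site1))
   = p_one d * ((y2 + y3) / 2).
  case: o1 => [->|->]; first by rewrite !mul0r addr0.
  by rewrite -mulrDr E.
have T4 : p_four d * regret tp (rule_four d (tp site4)) + p_four d * regret tm (rule_four d (tm site4))
   = p_four d * ((y2 + y3) / 2).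
  case: o4 => [->|->]; first by rewrite !mul0r addr0.
  by rewrite -mulrDr E.
have T0 := E (rule_empty d).
rewrite /exp_regret.
have -> : p_empty d * regret tp (rule_empty d) + p_one d * regret tp (rule_one d (tp site1)) +
  p_four d * regret tp (rule_four d (tp site4)) +
  (p_empty d * regret tm (rule_empty d) + p_one d * regret tm (rule_one d (tm site1)) +
   p_four d * regret tm (rule_four d (tm site4)))
  = p_empty d * (regret tp (rule_empty d) + regret tm (rule_empty d))
    + (p_one d * regret tp (rule_one d (tp site1)) + p_one d * regret tm (rule_one d (tm site1)))
    + (p_four d * regret tp (rule_four d (tp site4)) + p_four d * regret tm (rule_four d (tm site4))).
  by ring.
rewrite T0 T1 T4 -!mulrDl hs; lra.
Qed.

Lemma ws_ge (C : R) (d : design R) tau : Theta C tau -> ((exp_regret d tau)%:E <= worst_regret C d)%E.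
Proof. by move=> h; apply: ereal_sup_ubound; exists tau. Qed.

Lemma ws_ge_pair (C : R) (d : design R) tp tm V : Theta C tp -> Theta C tm ->
  exp_regret d tp + exp_regret d tm = V -> ((V / 2)%:E <= worst_regret C d)%E.
Proof.
move=> hp hm e.
case: (lerP (V / 2) (exp_regret d tp)) => h.
  by apply: le_trans (@ws_ge C d tp hp); rewrite lee_fin.
apply: le_trans (@ws_ge C d tm hm); rewrite lee_fin; lra.
Qed.

Lemma ws_le (C : R) (d : design R) M : (forall tau, Theta C tau -> exp_regret d tau <= M) ->
  (worst_regret C d <= M%:E)%E.
Proof. by move=> h; apply: ge_ereal_sup => _ [tau ht <-]; rewrite lee_fin; exact: h. Qed.

End S.
Arguments clip {R}.
Arguments clipP {R}.
Arguments rho {R}.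
Arguments scale2 {R}.
Arguments core {R}.
Arguments clip01 {R}.
Arguments clip_meas {R}.
Arguments site_bound {R}.
Arguments tau4 {R}.
Arguments absnat {R}.
Arguments thetaP {R}.
Arguments rpair {R}.
Arguments exp_pair {R}.
Arguments ws_ge {R}.
Arguments ws_ge_pair {R}.
Arguments ws_le {R}.

Lemma thetaD (R : realType) (C : R) tau : Theta C tau ->
  (`|tau site2 - tau site1| <= C /\ `|tau site3 - tau site1| <= 2 * C /\
      `|tau site4 - tau site1| <= 3 * C /\ `|tau site3 - tau site2| <= C /\
      `|tau site4 - tau site2| <= 2 * C /\ `|tau site4 - tau site3| <= C).
Proof.
move=> ht.
have := ht site2 site1; have := ht site3 site1; have := ht site4 site1.
have := ht site3 site2; have := ht site4 site2; have := ht site4 site3.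
rewrite /covX /= !absnat /= /subn /=.
move=> a b c d e f; do !split; lra.
Qed.

Ltac thP := apply: thetaP; [lra | ..]; rewrite ler_norml; apply/andP; split; lra.

Theorem lemmaB1 (R : realType) (C : R) (hC : 0 < C) :
  (ereal_inf [set worst_regret C d | d in @valid_design R] = (C / 2)%:E
   /\ exists d, valid_design d /\ worst_regret C d = (C / 2)%:E)
  /\
  (ereal_inf [set worst_regret C d | d in @purposive R] = (3 * C / 4)%:E
   /\ exists d, purposive d /\ worst_regret C d = (3 * C / 4)%:E).
Proof.
have hC0 : 0 <= C by exact: ltW.
have hC2 : 0 < 2 * C by lra.
pose d1 := Design (0:R) (1/2) (1/2) (0,0) (fun x => (clip C x, clip C x))
  (fun x => (clip C x, clip C x)).
pose d2 := Design (0:R) 1 0 (0,0) (fun x => (clip C x, clip (2 * C) x)) (fun _ => (0,0)).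
have in00 : in01 ((0:R), (0:R)) by rewrite /in01 /=; lra.
have v1 : valid_design d1.
  split; first by rewrite /=; lra.
  split; first (split; first exact: in00).
    by split=> x; split; exact: clip01.
  by split; [|split; [|split]]; exact: clip_meas.
have v2 : valid_design d2.
  split; first by rewrite /=; lra.
  split; first (split; first exact: in00).
    by split=> x; [split; exact: clip01 | exact: in00].
  by split; [|split; [|split]]; [exact: clip_meas | exact: clip_meas | exact: measurable_cst..].
have p2 : purposive d2 by split=> //; right; left.
have LB : forall d, valid_design d -> ((C / 2)%:E <= worst_regret C d)%E.
  move=> d hd.
  have hp : Theta C (tau4 0 C C 0) by thP.
  have hm : Theta C (tau4 0 (-C) (-C) 0) by thP.
  have e := @exp_pair R d (tau4 0 C C 0) (tau4 0 (-C) (-C) 0) C C hd hC hC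
    erefl erefl erefl erefl (or_intror erefl) (or_intror erefl).
  apply: le_trans (@ws_ge_pair _ C d _ _ _ hp hm e); rewrite lee_fin; lra.
have UB1 : (worst_regret C d1 <= (C / 2)%:E)%E.
  apply: ws_le => tau ht.
  case: (@thetaD _ _ _ ht) => a [b [c [d [e f]]]].
  have := @core _ _ _ _ _ _ hC a b c d e f.
  rewrite /exp_regret /regret /rho /=.
  lra.
have W1 : worst_regret C d1 = (C / 2)%:E by apply/le_anti; rewrite UB1 LB.
have LBP : forall d, purposive d -> ((3 * C / 4)%:E <= worst_regret C d)%E.
  move=> d [hd hp]; have [[hpe [hp1 [hp4 hs]]] _] := hd.
  case: hp => [h|[h|h]].
  - have hp : Theta C (tau4 (3 * C / 2) (3 * C / 2) (3 * C / 2) (3 * C / 2)) by thP.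
    have hm : Theta C (tau4 (- (3 * C / 2)) (- (3 * C / 2)) (- (3 * C / 2)) (- (3 * C / 2))) by thP.
    have y : 0 < 3 * C / 2 by lra.
    have z1 : p_one d = 0 by lra.
    have z4 : p_four d = 0 by lra.
    have e := @exp_pair R d (tau4 (3 * C / 2) (3 * C / 2) (3 * C / 2) (3 * C / 2))
      (tau4 (- (3 * C / 2)) (- (3 * C / 2)) (- (3 * C / 2)) (- (3 * C / 2)))
      (3 * C / 2) (3 * C / 2) hd y y
      erefl erefl erefl erefl (or_introl z1) (or_introl z4).
    apply: le_trans (@ws_ge_pair _ C d _ _ _ hp hm e); rewrite ?lee_fin; lra.
  - have hp : Theta C (tau4 0 C (2 * C) (3 * C)) by thP.
    have hm : Theta C (tau4 0 (- C) (- (2 * C)) (- (3 * C))) by thP.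
    have z4 : p_four d = 0 by lra.
    have e := @exp_pair R d (tau4 0 C (2 * C) (3 * C)) (tau4 0 (- C) (- (2 * C)) (- (3 * C)))
      C (2 * C) hd hC hC2
      erefl erefl erefl erefl (or_intror erefl) (or_introl z4).
    apply: le_trans (@ws_ge_pair _ C d _ _ _ hp hm e); rewrite ?lee_fin; lra.
  - have hp : Theta C (tau4 (3 * C) (2 * C) C 0) by thP.
    have hm : Theta C (tau4 (- (3 * C)) (- (2 * C)) (- C) 0) by thP.
    have z1 : p_one d = 0 by lra.
    have e := @exp_pair R d (tau4 (3 * C) (2 * C) C 0) (tau4 (- (3 * C)) (- (2 * C)) (- C) 0)
      (2 * C) C hd hC2 hC
      erefl erefl erefl erefl (or_introl z1) (or_intror erefl).
    apply: le_trans (@ws_ge_pair _ C d _ _ _ hp hm e); rewrite ?lee_fin; lra.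
have UB2 : (worst_regret C d2 <= (3 * C / 4)%:E)%E.
  apply: ws_le => tau ht.
  case: (@thetaD _ _ _ ht) => a [b _].
  have s1 := @site_bound _ _ _ _ hC a.
  have s2 := @site_bound _ _ _ _ hC2 b.
  move: s1 s2; rewrite /exp_regret /regret /rho /=.
  lra.
have W2 : worst_regret C d2 = (3 * C / 4)%:E by apply/le_anti; rewrite UB2 LBP.
split; split.
- apply/le_anti/andP; split.
    by rewrite -W1; apply: ereal_inf_lbound; exists d1.
  by apply: le_ereal_inf_tmp => _ [d hd <-]; exact: LB.
- by exists d1.
- apply/le_anti/andP; split.
    by rewrite -W2; apply: ereal_inf_lbound; exists d2.
  by apply: le_ereal_inf_tmp => _ [d hd <-]; exact: LBP.
- by exists d2.
Qed.
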